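(* (i) Let $\mathcal G$ be a complex Lie algebra with subalgebra $\mathcal H$ and bilinear form $(\cdot,\cdot)$ satisfying GR1–GR3. Then $(\alpha,\delta)=0$ for all $\alpha\in R$ and $\delta\in R^0$. (ii) Let $(\mathcal G,(\cdot,\cdot),\mathcal H)$ be a generalized reductive Lie algebra. Then $\delta\in R^0$ is isolated if and only if $\mathcal G_\delta\subseteq C_{\mathcal G}(\mathcal G_c)$, the centralizer of the core in $\mathcal G$.
   Context: (GR1) $(\cdot,\cdot)$ is symmetric, nondegenerate and invariant on $\mathcal G$. (GR2) $\mathcal H$ is a nontrivial finite-dimensional abelian subalgebra equal to its centralizer in $\mathcal G$, and $\mathrm{ad}(h)$ is diagonalizable for all $h\in\mathcal H$. Then $\mathcal G=\bigoplus_{\alpha\in\mathcal H^*}\mathcal G_\alpha$, $\mathcal G_\alpha=\{x:[h,x]=\alpha(h)x\ \forall h\in\mathcal H\}$, root system $R=\{\alpha:\mathcal G_\alpha\ne0\}$; the form is nondegenerate on $\mathcal H$; $t_\alpha\in\mathcal H$ with $(t_\alpha,h)=\alpha(h)$ for all $h$; $(\alpha,\beta):=(t_\alpha,t_\beta)$; $R^\times=\{\alpha\in R:(\alpha,\alpha)\ne0\}$, $R^0=\{\alpha\in R:(\alpha,\alpha)=0\}$. (GR3) for $\alpha\in R^\times$, $x\in\mathcal G_\alpha$, $\mathrm{ad}(x)$ is locally nilpotent on $\mathcal G$. (GR4) $R$ is discrete in $\mathcal H^*$. (GR5) $R^\times\ne\emptyset$. A generalized reductive Lie algebra is a triple satisfying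 GR1–GR5. The core $\mathcal G_c$ is the subalgebra generated by $\mathcal G_\alpha$, $\alpha\in R^\times$. A root $\delta\in R^0$ is isolated if $\delta+\alpha\notin R$ for every $\alpha\in R^\times$. *)

(* Defs.v *)
From HB Require Import structures.
From mathcomp Require Import all_boot all_order all_algebra.
From mathcomp Require Import reals complex.
From Stdlib Require Import ClassicalEpsilon.
Set Implicit Arguments. Unset Strict Implicit. Unset Printing Implicit Defensive.
Import Order.TTheory GRing.Theory Num.Theory.
Local Open Scope ring_scope.
Local Open Scope complex_scope.

Section LieDefs.
Variables (R : realType).
Local Notation C := (R[i]).
Variables (V : lmodType C) (br : V -> V -> V).

Definition is_lie_bracket : Prop :=
  [/\ (forall a x y z, br (a *: x + y) z = a *: br x z + br y z),
      (forall a x y z, br x (a *: y + z) = a *: br x y + br x z),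
      (forall x, br x x = 0) &
      (forall x y z, br x (br y z) + br y (br z x) + br z (br x y) = 0)].

Definition GR1 (B : V -> V -> C) : Prop :=
  [/\ (forall a x y z, B (a *: x + y) z = a * B x z + B y z),
      (forall x y, B x y = B y x),
      (forall x, (forall y, B x y = 0) -> x = 0) &
      (forall x y z, B (br x y) z = B x (br y z))].

(* H is given by a basis h : 'I_n -> V; H^* is identified with C^n
   via the values of a functional on the basis. *)
Variables (n : nat) (h : 'I_n -> V).

Definition hvec (c : {ffun 'I_n -> C}) : V := \sum_i c i *: h i.
Definition inH (x : V) : Prop := exists c, x = hvec c.
Definition evalH (alpha c : {ffun 'I_n -> C}) : C := \sum_i alpha i * c i.

Definition diagonalizable_ad (y : V) : Prop :=
  forall x, exists s : seq V,
    (forall z, z \in s -> exists lam : C, br y z = lam *: z) /\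
    x = \sum_(z <- s) z.

Definition GR2 : Prop :=
  [/\ (0 < n)%N,
      (forall c, hvec c = 0 -> c = 0),
      (forall i j, br (h i) (h j) = 0),
      (forall x, (forall c, br (hvec c) x = 0) <-> inH x)
                                                      &
      (forall c, diagonalizable_ad (hvec c))].

Definition rootsp (alpha : {ffun 'I_n -> C}) (x : V) : Prop :=
  forall c, br (hvec c) x = evalH alpha c *: x.
Definition is_root (alpha : {ffun 'I_n -> C}) : Prop :=
  exists2 x, x != 0 & rootsp alpha x.

Variable (B : V -> V -> C).

Definition tcoef (alpha : {ffun 'I_n -> C}) : {ffun 'I_n -> C} :=
  epsilon (inhabits 0)
    (fun c => forall d, B (hvec c) (hvec d) = evalH alpha d).
Definition troot (alpha : {ffun 'I_n -> C}) : V := hvec (tcoef alpha).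
Definition formR (alpha beta : {ffun 'I_n -> C}) : C :=
  B (troot alpha) (troot beta).

Definition nonisotropic_root alpha := is_root alpha /\ formR alpha alpha != 0.
Definition isotropic_root alpha := is_root alpha /\ formR alpha alpha = 0.

Definition locally_nilpotent_ad (x : V) : Prop :=
  forall y, exists k, iter k (br x) y = 0.
Definition GR3 : Prop :=
  forall alpha x, nonisotropic_root alpha -> rootsp alpha x ->
    locally_nilpotent_ad x.

(* (GR4) R discrete in H^* (standard topology on C^n, via the max norm) *)
Definition GR4 : Prop :=
  forall alpha, is_root alpha -> exists2 e : C, 0 < e &
    forall beta, is_root beta -> (forall i, `|beta i - alpha i| < e) ->
      beta = alpha.

Definition GR5 : Prop := exists alpha, nonisotropic_root alpha.

Definition subalgebra (S : V -> Prop) : Prop :=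
  [/\ S 0, (forall x y, S x -> S y -> S (x + y)),
      (forall (a : C) x, S x -> S (a *: x)) &
      (forall x y, S x -> S y -> S (br x y))].
Definition core (x : V) : Prop :=
  forall S, subalgebra S ->
    (forall alpha y, nonisotropic_root alpha -> rootsp alpha y -> S y) -> S x.
Definition centralizes_core (x : V) : Prop :=
  forall y, core y -> br x y = 0.

Definition isolated (delta : {ffun 'I_n -> C}) : Prop :=
  isotropic_root delta /\
  forall alpha, nonisotropic_root alpha -> ~ is_root (delta + alpha).

End LieDefs.

(* Main.v *)
Require Import Defs.
From HB Require Import structures.
From mathcomp Require Import all_boot all_order all_algebra.
From mathcomp Require Import reals complex.
From mathcomp Require Import ring zify.
From Stdlib Require Import ClassicalEpsilon Classical.
Import Order.TTheory GRing.Theory Num.Theory.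
Local Open Scope ring_scope.
Local Open Scope complex_scope.
Set Implicit Arguments. Unset Strict Implicit. Unset Printing Implicit Defensive.

Section Basics.
Variables (R : realType) (V : lmodType R[i]) (br : V -> V -> V)
    (B : V -> V -> R[i]) (n : nat) (h : 'I_n -> V).
Local Notation C := (R[i]).
Hypothesis HL : is_lie_bracket br.
Hypothesis H1 : GR1 br B.

Lemma brDl x y z : br (x + y) z = br x z + br y z.
Proof. by case: HL => L _ _ _; rewrite -[x in LHS]scale1r L scale1r. Qed.
Lemma brDr x y z : br z (x + y) = br z x + br z y.
Proof. by case: HL => _ L _ _; rewrite -[x in LHS]scale1r L scale1r. Qed.
Lemma br0l z : br 0 z = 0.
Proof. by apply/eqP; rewrite -[X in X == _](addrK (br 0 z)) -brDl addr0 subrr. Qed.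
Lemma br0r z : br z 0 = 0.
Proof. by apply/eqP; rewrite -[X in X == _](addrK (br z 0)) -brDr addr0 subrr. Qed.
Lemma brZl a x z : br (a *: x) z = a *: br x z.
Proof. by case: HL => L _ _ _; rewrite -[a *: x]addr0 L br0l addr0. Qed.
Lemma brZr a x z : br z (a *: x) = a *: br z x.
Proof. by case: HL => _ L _ _; rewrite -[a *: x]addr0 L br0r addr0. Qed.
Lemma brNl x z : br (- x) z = - br x z.
Proof. by rewrite -scaleN1r brZl scaleN1r. Qed.
Lemma brNr x z : br z (- x) = - br z x.
Proof. by rewrite -scaleN1r brZr scaleN1r. Qed.
Lemma brxx x : br x x = 0.
Proof. by case: HL. Qed.
Lemma br_anti x y : br y x = - br x y.
Proof.
have := brxx (x + y); rewrite brDl !brDr !brxx add0r addr0 => /eqP.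
by rewrite addr_eq0 => /eqP ->; rewrite opprK.
Qed.
Lemma br_jac x y z : br x (br y z) = br (br x y) z + br y (br x z).
Proof.
case: HL => _ _ _ J; have := J x y z.
rewrite (br_anti z (br x y)) (br_anti z x) brNr.
move/eqP; rewrite -addrA addr_eq0 => /eqP ->.
by rewrite opprD addrC.
Qed.

Lemma BDl x y z : B (x + y) z = B x z + B y z.
Proof. by case: H1 => L _ _ _; rewrite -[x in LHS]scale1r L mul1r. Qed.
Lemma B0l z : B 0 z = 0.
Proof. by apply/eqP; rewrite -[X in X == _](addrK (B 0 z)) -BDl addr0 subrr. Qed.
Lemma BZl a x z : B (a *: x) z = a * B x z.
Proof. by case: H1 => L _ _ _; rewrite -[a *: x]addr0 L B0l addr0. Qed.
Lemma BC x y : B x y = B y x.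
Proof. by case: H1. Qed.
Lemma BDr x y z : B z (x + y) = B z x + B z y.
Proof. by rewrite BC BDl !(BC z). Qed.
Lemma BZr a x z : B z (a *: x) = a * B z x.
Proof. by rewrite BC BZl BC. Qed.
Lemma B0r z : B z 0 = 0.
Proof. by rewrite BC B0l. Qed.
Lemma BNl x z : B (- x) z = - B x z.
Proof. by rewrite -scaleN1r BZl mulN1r. Qed.
Lemma BNr x z : B z (- x) = - B z x.
Proof. by rewrite -scaleN1r BZr mulN1r. Qed.
Lemma Binv x y z : B (br x y) z = B x (br y z).
Proof. by case: H1. Qed.
Lemma Bnondeg x : x != 0 -> exists v, B x v != 0.
Proof.
move=> xn0; apply: NNPP => hn; move/eqP: xn0; apply; case: H1 => _ _ N _.
by apply: N => y; apply: NNPP => hy; apply: hn; exists y; apply/eqP.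
Qed.

Lemma br_suml I (r : seq I) (P : pred I) (F : I -> V) z :
  br (\sum_(i <- r | P i) F i) z = \sum_(i <- r | P i) br (F i) z.
Proof. by apply: (big_morph (fun x => br x z)) => [x y|]; [exact: brDl | exact: br0l]. Qed.

Local Notation FF := {ffun 'I_n -> C}.
Implicit Types (a b c d : FF).
Lemma evD a b c : evalH (a + b) c = evalH a c + evalH b c.
Proof. by rewrite /evalH -big_split; apply: eq_bigr => i _; rewrite ffunE mulrDl. Qed.
Lemma evN a c : evalH (- a) c = - evalH a c.
Proof. by rewrite /evalH -sumrN; apply: eq_bigr => i _; rewrite ffunE mulNr. Qed.
Lemma ev0 c : evalH 0 c = 0.
Proof. by rewrite /evalH big1 // => i _; rewrite ffunE mul0r. Qed.
Lemma evMn a c m : evalH (a *+ m) c = evalH a c *+ m.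
Proof. by elim: m => [|m IH]; rewrite ?mulr0n ?ev0 // !mulrS evD IH. Qed.
Lemma evMz a c (k : int) : evalH (a *~ k) c = evalH a c *~ k.
Proof. by case: k => m; [exact: evMn | rewrite NegzE !mulrNz evN evMn]. Qed.

Lemma br_hvec c x : br (hvec h c) x = \sum_i c i *: br (h i) x.
Proof. by rewrite /hvec br_suml; apply: eq_bigr => i _; rewrite brZl. Qed.

Definition unitf (i : 'I_n) : {ffun 'I_n -> C} := [ffun j => (j == i)%:R].
Lemma hvec_unit i : hvec h (unitf i) = h i.
Proof.
rewrite /hvec (bigD1 i) //= big1 ?addr0; first by rewrite ffunE eqxx scale1r.
by move=> j /negbTE ji; rewrite ffunE ji scale0r.
Qed.
Lemma ev_unit a i : evalH a (unitf i) = a i.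
Proof.
rewrite /evalH (bigD1 i) //= big1 ?addr0; first by rewrite ffunE eqxx mulr1.
by move=> j /negbTE ji; rewrite ffunE ji mulr0.
Qed.

Lemma rootspP a x : rootsp br h a x <-> forall i, br (h i) x = a i *: x.
Proof.
split=> [Hr i|Hr c]; first by rewrite -hvec_unit Hr ev_unit.
rewrite br_hvec /evalH scaler_suml; apply: eq_bigr => i _.
by rewrite Hr scalerA mulrC.
Qed.

Lemma weight_br k g w lam mu : br k w = lam *: w -> br k g = mu *: g ->
  br k (br g w) = (lam + mu) *: br g w.
Proof. by move=> Hw Hg; rewrite br_jac Hg Hw brZl brZr scalerDl addrC. Qed.

Lemma weight_iter k g x lam mu m : br k x = lam *: x -> br k g = mu *: g ->
  br k (iter m (br g) x) = (lam + mu *+ m) *: iter m (br g) x.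
Proof.
move=> Hx Hg; elim: m => [|m IH]; first by rewrite mulr0n addr0.
by rewrite iterS (weight_br IH Hg) mulrS [mu + _]addrC addrA.
Qed.

Lemma rootsp_br a b g w : rootsp br h a g -> rootsp br h b w ->
  rootsp br h (b + a) (br g w).
Proof. by move=> Hg Hw c; rewrite (weight_br (Hw c) (Hg c)) evD. Qed.

Lemma rootsp_iter a b g x m : rootsp br h b g -> rootsp br h a x ->
  rootsp br h (a + b *+ m) (iter m (br g) x).
Proof. by move=> Hg Hx c; rewrite (weight_iter m (Hx c) (Hg c)) evD evMn. Qed.

Lemma rootsp_ext a b x : (forall c, evalH a c = evalH b c) ->
  rootsp br h a x -> rootsp br h b x.
Proof. by move=> E Hx c; rewrite -E. Qed.

Lemma rootsp_eq a b x : a = b -> rootsp br h a x -> rootsp br h b x.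
Proof. by move=> ->. Qed.


Definition Pop (k : V) (ms : seq C) (w : V) :=
  foldr (fun mu w => br k w - mu *: w) w ms.
Lemma PopD k ms u v : Pop k ms (u + v) = Pop k ms u + Pop k ms v.
Proof.
elim: ms => [//|mu ms IH] /=; rewrite IH brDr scalerDr opprD.
by rewrite addrACA.
Qed.
Lemma PopZ k ms (t : C) u : Pop k ms (t *: u) = t *: Pop k ms u.
Proof. by elim: ms => [//|mu ms IH] /=; rewrite IH brZr scalerBr !scalerA mulrC. Qed.
Lemma Pop0 k ms : Pop k ms 0 = 0.
Proof. by have := PopZ k ms 0 0; rewrite !scale0r. Qed.
Lemma Pop_comm k k' ms w : br k' k = 0 ->
  br k' (Pop k ms w) = Pop k ms (br k' w).
Proof.
move=> kk; elim: ms => [//|mu ms IH] /=.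
by rewrite brDr brNr brZr br_jac kk br0l add0r IH.
Qed.
Lemma Pop_eig k ms z lam : br k z = lam *: z ->
  Pop k ms z = (\prod_(mu <- ms) (lam - mu)) *: z.
Proof.
move=> Hz; elim: ms => [|mu ms IH] /=; first by rewrite big_nil scale1r.
rewrite IH big_cons brZr Hz !scalerA -scalerBl; congr (_ *: _); ring.
Qed.
Lemma PopB k ms x w lam : br k x = lam *: x ->
  B x (Pop k ms w) = (\prod_(mu <- ms) (- lam - mu)) * B x w.
Proof.
move=> Hx; elim: ms => [|mu ms IH] /=; first by rewrite big_nil mul1r.
rewrite BDr BNr BZr -Binv (br_anti k x) Hx BNl BZl IH big_cons.
ring.
Qed.

Lemma proj_exists k (s : seq V) lam0 :
  (forall z, z \in s -> exists l, br k z = l *: z) ->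
  exists ms, (forall mu, mu \in ms -> mu != lam0) /\
    br k (Pop k ms (\sum_(z <- s) z)) = lam0 *: Pop k ms (\sum_(z <- s) z).
Proof.
elim: s => [|z s IH] Hs.
  by exists [::]; split => //; rewrite big_nil /= br0r scaler0.
have [ms [Hms Hb]] : exists ms, (forall mu, mu \in ms -> mu != lam0) /\
    br k (Pop k ms (\sum_(z <- s) z)) = lam0 *: Pop k ms (\sum_(z <- s) z).
  by apply: IH => y ys; apply: Hs; rewrite inE ys orbT.
have [l Hl] := Hs z (mem_head _ _).
rewrite big_cons.
case: (eqVneq l lam0) => [Ell|Nll].
  exists ms; split => //; rewrite PopD brDr Hb scalerDr; congr (_ + _).
  by rewrite Pop_comm ?brxx // Hl PopZ Ell.
exists (l :: ms); split.
  by move=> mu; rewrite inE => /orP [/eqP ->|]; [|apply: Hms].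
rewrite PopD (Pop_eig _ Hl) big_cons subrr mul0r scale0r add0r /=.
by rewrite Hb -scalerBl brZr Hb !scalerA mulrC.
Qed.

Hypothesis H2 : GR2 br h.

Lemma pairing a x : rootsp br h a x -> x != 0 ->
  exists y, rootsp br h (- a) y /\ B x y != 0.
Proof.
move=> Hx xn0.
have Hxi := (iffLR (rootspP a x) Hx).
case: H2 => _ _ Hab _ Hdiag.
suff: forall m, (m <= n)%N -> exists w, B x w != 0 /\
   forall i : 'I_n, (i < m)%N -> br (h i) w = (- a i) *: w.
  move=> /(_ n (leqnn n)) [w [Bw Hw]]; exists w; split => //.
  by apply/rootspP => i; rewrite ffunE Hw.
elim=> [_|m IH lt_mn].
  by have [v Hv] := Bnondeg xn0; exists v; split.
have [w [Bw Hw]] := IH (ltnW lt_mn).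
pose i0 := Ordinal lt_mn.
have [s [Hs Ew]] := Hdiag (unitf i0) w.
rewrite hvec_unit in Hs.
have [ms [Hms Hb]] := proj_exists (- a i0) Hs.
rewrite -Ew in Hb.
exists (Pop (h i0) ms w); split.
  rewrite (PopB _ _ (Hxi i0)) mulf_neq0 //.
  rewrite prodf_seq_neq0; apply/allP => mu /Hms /= mun.
  by rewrite subr_eq0 eq_sym.
move=> i; rewrite ltnS leq_eqVlt => /orP [/eqP Ei|lt_im].
  by have -> : i = i0 by apply: val_inj.
by rewrite Pop_comm ?Hab // Hw // PopZ.
Qed.


Lemma rootspZ a (t : C) x : rootsp br h a x -> rootsp br h a (t *: x).
Proof. by move=> Hx c; rewrite brZr Hx !scalerA mulrC. Qed.

Lemma br_root_neg a x y : rootsp br h a x -> rootsp br h (- a) y ->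
  exists d, br x y = hvec h d.
Proof.
move=> Hx Hy; case: H2 => _ _ _ Hcen _.
have [d ->] : inH h (br x y).
  apply/Hcen => c; rewrite (rootsp_br Hx Hy) evD evN.
  by rewrite addNr scale0r.
by exists d.
Qed.

Lemma spec_d a x y d : rootsp br h a x -> rootsp br h (- a) y ->
  br x y = hvec h d -> forall e, B (hvec h d) (hvec h e) = evalH a e * B x y.
Proof.
move=> Hx Hy E e; rewrite -E Binv (br_anti (hvec h e) y) Hy evN.
by rewrite scaleNr opprK BZr.
Qed.

Lemma tcoef_spec a : is_root br h a ->
  forall e, B (hvec h (tcoef h B a)) (hvec h e) = evalH a e.
Proof.
case=> x xn0 Hx.
have [y [Hy Bxy]] := pairing Hx xn0.
have Hy' := rootspZ (B x y)^-1 Hy.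
have [d Ed] := br_root_neg Hx Hy'.
have Hd := spec_d Hx Hy' Ed.
rewrite /tcoef; apply: (epsilon_spec (inhabits 0) (fun c =>
   forall e, B (hvec h c) (hvec h e) = evalH a e)).
exists d => e; rewrite Hd BZr mulVf // mulr1 //.
Qed.

Lemma formR_E a b : is_root br h a ->
  formR h B a b = evalH a (tcoef h B b).
Proof. by move=> Ha; rewrite /formR /troot tcoef_spec. Qed.

Lemma Fsym a b : is_root br h a -> is_root br h b ->
  evalH a (tcoef h B b) = evalH b (tcoef h B a).
Proof. by move=> Ha Hb; rewrite -!formR_E // /formR BC. Qed.

Lemma neg_root a : is_root br h a -> is_root br h (- a).
Proof.
case=> x xn0 Hx; have [y [Hy Bxy]] := pairing Hx xn0.
exists y => //; apply: contraNneq Bxy => ->; by rewrite B0r.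
Qed.

Lemma neg_noniso a : nonisotropic_root br h B a -> nonisotropic_root br h B (- a).
Proof.
case=> Ha Hn; have Hna := neg_root Ha; split => //.
rewrite formR_E // evN Fsym // evN opprK -formR_E //.
Qed.

Lemma sl2_data b e (s : C) : rootsp br h b e -> e != 0 ->
  exists f d, [/\ rootsp br h (- b) f, B e f = s, br e f = hvec h d &
    forall nu, is_root br h nu -> evalH nu d = s * evalH nu (tcoef h B b)].
Proof.
move=> He en0; have Hb : is_root br h b by exists e.
have [y [Hy Bey]] := pairing He en0.
have Hf := rootspZ (s / B e y) Hy.
have [d Ed] := br_root_neg He Hf.
have Hd := spec_d He Hf Ed.
exists ((s / B e y) *: y), d; split => //.
  by rewrite BZr divfK.
move=> nu Hnu; rewrite -(tcoef_spec Hnu d) BC Hd BZr divfK //.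
by rewrite mulrC Fsym.
Qed.


Lemma chain e f u (lam : C) : br e u = 0 ->
  (forall i, br (br e f) (iter i (br f) u) = (lam - 2 * i%:R) *: iter i (br f) u) ->
  forall j, br e (iter j.+1 (br f) u) = ((j.+1)%:R * (lam - j%:R)) *: iter j (br f) u.
Proof.
move=> Heu Hw; elim=> [|j IH].
  rewrite /= br_jac Heu br0r addr0 (Hw 0%N) /=; congr (_ *: _); ring.
rewrite [iter j.+2 _ _]iterS br_jac IH Hw brZr -iterS -scalerDl.
congr (_ *: _); rewrite -!natr1; ring.
Qed.

Lemma int_expr (j m : nat) : ((j%:Z - (m.*2)%:Z)%:~R : C) = j%:R - 2 *+ m.
Proof.
rewrite intrB; change (j%:R - (m.*2)%:R = j%:R - 2 *+ m :> C).
by rewrite -mul2n natrM mulr_natr.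
Qed.

Lemma min_iter (g v : V) : v != 0 -> (exists k, iter k (br g) v = 0) ->
  exists m, iter m (br g) v != 0 /\ br g (iter m (br g) v) = 0.
Proof.
move=> vn0 [k Hk].
have exP : exists k, iter k (br g) v == 0 by exists k; apply/eqP.
case: (ex_minnP exP) => [[|m]] /eqP Hm Hmin; first by move: vn0; rewrite /= in Hm; rewrite Hm eqxx.
exists m; split => //; apply/negP => /Hmin; by rewrite ltnn.
Qed.

Hypothesis H3 : GR3 br h B.

Lemma integrality b g : nonisotropic_root br h B b -> is_root br h g ->
  exists z : int, 2 * evalH g (tcoef h B b) = z%:~R * evalH b (tcoef h B b).
Proof.
move=> Hnb Hg; have [Hb Hbb] := Hnb.
rewrite formR_E // in Hbb.
set bb := evalH b (tcoef h B b) in Hbb *.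
have [e en0 He] := Hb.
have [f [d [Hf Bef Ed Hd]]] := sl2_data (2 / bb) He en0.
have Hdb : evalH b d = 2 by rewrite Hd // divfK.
have Hfn := neg_noniso Hnb.
have nile := H3 Hnb He.
have nilf := H3 Hfn Hf.
have [v vn0 Hv] := Hg.
have [m [un0 Heu]] := min_iter vn0 (nile v).
set u := iter m (br e) v in un0 Heu.
set lam := evalH g d + 2 *+ m.
have Hu : br (hvec h d) u = lam *: u by rewrite /u (weight_iter m (Hv d) (He d)) Hdb.
have Hfw : br (hvec h d) f = (- 2) *: f by rewrite Hf evN Hdb.
have Hi : forall i, br (br e f) (iter i (br f) u) = (lam - 2 * i%:R) *: iter i (br f) u.
  by move=> i; rewrite Ed (weight_iter i Hu Hfw) mulNrn mulr_natr.
have [j [wn0 Hw]] := min_iter un0 (nilf u).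
have := chain Heu Hi j; rewrite iterS Hw br0r => /esym /eqP.
rewrite scaler_eq0 (negbTE wn0) orbF mulf_eq0 pnatr_eq0 /= subr_eq0 => /eqP Ej.
exists (j%:Z - (m.*2)%:Z); rewrite int_expr -Ej /lam addrK.
by rewrite (Hd g Hg) mulrAC divfK.
Qed.


Lemma exists_bound (a t : C) : 0 < t -> exists N : nat, `|a| + t < t *+ N.
Proof.
move=> tgt0; set r := (`|a| + t) / t.
have r0 : 0 <= r by rewrite divr_ge0 // ?addr_ge0 ?normr_ge0 ?ltW.
have rR : r \is Num.real by exact: ger0_real.
have r0' : 0 <= complex.Re r by rewrite -(@lecR R) RRe_real // (rmorph0 (real_complex R)).
have := archi_boundP r0'; set N := Num.bound _ => HN.
exists N.
have : r < N%:R by rewrite -(RRe_real rR) -(rmorph_nat (real_complex R)) ltcR.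
by rewrite ltr_pdivrMr // mulr_natl.
Qed.

Lemma string_roots a dl x y d (c : C) : is_root br h a -> rootsp br h dl x ->
  rootsp br h (- dl) y -> br x y = hvec h d -> c != 0 ->
  (forall k : int, evalH (a + dl *~ k) d = c) -> evalH dl d = 0 ->
  forall N : nat, exists k : int, (N <= `|k|)%N /\ is_root br h (a + dl *~ k).
Proof.
move=> Ha Hx Hy Ed cn0 Hc Hdl N.
case: (classic (exists K : nat, (N <= K)%N /\ is_root br h (a + dl *+ K)))
   => [[K [HK HrK]]|Hno].
  by exists K%:Z; split.
have [K [HrK HnK]] : exists K, is_root br h (a + dl *+ K) /\
    ~ is_root br h (a + dl *+ K.+1).
  apply: NNPP => Hn; apply: Hno; exists N; split => //.
  elim: N => [|N IH]; first by rewrite mulr0n addr0.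
  by apply: NNPP => HN1; apply: Hn; exists N; split.
have [w wn0 Hw] := HrK.
have Xw : br x w = 0.
  apply: NNPP => hne; apply: HnK; exists (br x w); first by apply/eqP.
  by rewrite mulrSr addrA; apply: rootsp_br.
have Hwd : br (hvec h d) w = c *: w by rewrite Hw (Hc K%:Z).
have Hyd : br (hvec h d) y = 0 *: y by rewrite Hy evN Hdl oppr0.
have Hj : forall j, br (br x y) (iter j (br y) w) = c *: iter j (br y) w.
  by move=> j; rewrite Ed (weight_iter j Hwd Hyd) mul0rn addr0.
have heis : forall j, br x (iter j.+1 (br y) w) = ((j.+1)%:R * c) *: iter j (br y) w.
  elim=> [|j IH]; first by rewrite /= br_jac Xw br0r addr0 (Hj 0%N) mul1r.
  rewrite [iter j.+2 _ _]iterS br_jac IH Hj brZr -iterS -scalerDl.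
  congr (_ *: _); rewrite -[(j.+2)%:R]natr1; ring.
have nz : forall j, iter j (br y) w != 0.
  elim=> [//|j IH]; apply/negP => /eqP E; have := heis j.
  rewrite E br0r => /esym /eqP; rewrite scaler_eq0 mulf_eq0 pnatr_eq0 /=.
  by rewrite (negbTE cn0) (negbTE IH).
exists (- N%:Z); split; first by rewrite abszN.
exists (iter (K + N) (br y) w) => //.
apply: rootsp_eq (rootsp_iter (K + N) Hy Hw).
by rewrite mulrNz mulNrn mulrnDr opprD addrA addrK.
Qed.


Lemma part_i a dl : is_root br h a -> isotropic_root br h B dl ->
  formR h B a dl = 0.
Proof.
move=> Ha [Hdl Hdd].
rewrite formR_E //; rewrite formR_E // in Hdd.
case: (eqVneq (evalH a (tcoef h B dl)) 0) => // cn0; exfalso.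
have [x xn0 Hx] := Hdl.
have [y [d [Hy Bxy Ed Hd]]] := sl2_data 1 Hx xn0.
have Hdl0 : evalH dl d = 0 by rewrite Hd // mul1r.
have Hc : forall k : int, evalH (a + dl *~ k) d = evalH a (tcoef h B dl).
  by move=> k; rewrite evD evMz Hdl0 mul0rz addr0 Hd // mul1r.
have tgt0 : 0 < `|evalH a (tcoef h B dl) + evalH a (tcoef h B dl)|.
  by rewrite normr_gt0 -mulr2n -mulr_natl mulf_neq0 // pnatr_eq0.
have [N HN] := exists_bound (evalH a (tcoef h B a)) tgt0.
have [k [Hk Hb]] := string_roots Ha Hx Hy Ed cn0 Hc Hdl0 N.
have Fbb : evalH (a + dl *~ k) (tcoef h B (a + dl *~ k)) =
    evalH a (tcoef h B a) + (evalH a (tcoef h B dl) + evalH a (tcoef h B dl)) *~ k.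
  rewrite [in LHS]evD evMz (Fsym Ha Hb) (Fsym Hdl Hb) !evD !evMz Hdd mul0rz addr0.
  by rewrite (Fsym Hdl Ha) mulrzDl addrA.
have Fdb : evalH dl (tcoef h B (a + dl *~ k)) = evalH a (tcoef h B dl).
  by rewrite (Fsym Hdl Hb) evD evMz Hdd mul0rz addr0.
move: Fbb Fdb tgt0 HN.
set c := evalH a (tcoef h B dl); set a' := evalH a (tcoef h B a).
set bb := evalH (a + dl *~ k) _; set t := `|c + c| => Fbb Fdb tgt0 HN.
have H1' : t *+ N <= `|(c + c) *~ k|.
  by rewrite normrMz -abszE ler_pMn2l.
have H2' : `|(c + c) *~ k| <= `|bb| + `|a'|.
  have -> : (c + c) *~ k = bb - a' by rewrite Fbb [a' + _]addrC addrK.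
  exact: ler_normB.
have tlt : t < `|bb|.
  by have := lt_le_trans HN (le_trans H1' H2'); rewrite addrC ltrD2r.
have bbn0 : bb != 0 by rewrite -normr_gt0; exact: le_lt_trans (normr_ge0 _) tlt.
have Hnb : nonisotropic_root br h B (a + dl *~ k) by split => //; rewrite formR_E.
have [z Hz] := integrality Hnb Hdl.
rewrite Fdb mulr_natl mulr2n in Hz.
have zn0 : z != 0.
  by apply: contraTneq tgt0 => z0; rewrite /t Hz z0 mul0r normr0 ltxx.
have z1 : 1 <= `|(z%:~R : C)|.
  by rewrite -intr_norm -abszE ler1z lez_nat absz_gt0.
have : `|bb| <= t.
  by rewrite /t Hz normrM -[X in X <= _]mul1r ler_wpM2r.
by move/(lt_le_trans tlt); rewrite ltxx.
Qed.


Lemma lam_ne0 (m j : nat) : (j <= m)%N -> (2 + 2 *+ m - j%:R : C) != 0.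
Proof.
move=> Hj.
have -> : (2 + 2 *+ m : C) = ((m.*2).+2)%:R.
  by rewrite -[(m.*2).+2]addn2 -mul2n natrD natrM mulr_natr addrC.
rewrite -natrB; last by lia.
by rewrite pnatr_eq0 subn_eq0 -ltnNge; lia.
Qed.

Lemma core_gen a y : nonisotropic_root br h B a -> rootsp br h a y ->
  core br h B y.
Proof. by move=> Ha Hy S _ Hg; exact: Hg a y Ha Hy. Qed.

Lemma iso_fwd dl : isolated br h B dl ->
  forall x, rootsp br h dl x -> centralizes_core br h B x.
Proof.
move=> [_ Hno] x Hx y Hy; apply: (Hy (fun z => br x z = 0)).
  split; first exact: br0r.
  - by move=> u v Hu Hv; rewrite brDr Hu Hv addr0.
  - by move=> t u Hu; rewrite brZr Hu scaler0.
  - by move=> u v Hu Hv; rewrite br_jac Hu Hv br0l br0r addr0.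
move=> a z Ha Hz; apply: NNPP => hne; apply: (Hno a Ha).
exists (br x z); first by apply/eqP.
by apply: rootsp_eq (rootsp_br Hx Hz); rewrite addrC.
Qed.

Lemma iso_bwd dl : isotropic_root br h B dl ->
  (forall x, rootsp br h dl x -> centralizes_core br h B x) ->
  isolated br h B dl.
Proof.
move=> Hiso Hcen; split => // a Hna Hr.
have [Ha Haa] := Hna; rewrite formR_E // in Haa.
have [e en0 He] := Ha.
have [f [d [Hf Bef Ed Hd]]] := sl2_data (2 / evalH a (tcoef h B a)) He en0.
have Hdb : evalH a d = 2 by rewrite Hd // divfK.
have Hnf := neg_noniso Hna.
have ce := core_gen Hna He; have cf := core_gen Hnf Hf.
have [Hdl Hdd] := Hiso; rewrite formR_E // in Hdd.
have [x xn0 Hx] := Hdl.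
have cx := Hcen x Hx.
have ex0 : br e x = 0 by rewrite br_anti (cx e ce) oppr0.
have fx0 : br f x = 0 by rewrite br_anti (cx f cf) oppr0.
have Hdl_d : evalH dl d = 0.
  have := Hx d; rewrite -Ed.
  have := br_jac e f x; rewrite fx0 ex0 br0r br0r addr0 => <- /esym /eqP.
  by rewrite scaler_eq0 (negbTE xn0) orbF => /eqP.
have Fda : evalH dl (tcoef h B a) = 0.
  move: Hdl_d; rewrite Hd // => /eqP; rewrite mulf_eq0 => /orP [|/eqP //].
  by rewrite mulf_eq0 invr_eq0 (negbTE Haa) orbF pnatr_eq0.
have Fbb : evalH (dl + a) (tcoef h B (dl + a)) = evalH a (tcoef h B a).
  rewrite [in LHS]evD (Fsym Hdl Hr) (Fsym Ha Hr) !evD Hdd (Fsym Ha Hdl) Fda.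
  by rewrite !add0r.
have Hnb : nonisotropic_root br h B (dl + a).
  by split => //; rewrite formR_E // Fbb.
have [z zn0 Hz] := Hr.
have nile := H3 Hna He.
have [m [un0 Heu]] := min_iter zn0 (nile z).
set u := iter m (br e) z in un0 Heu.
have Hzd : br (hvec h d) z = 2 *: z by rewrite Hz evD Hdl_d Hdb add0r.
have Hu : br (hvec h d) u = (2 + 2 *+ m) *: u by rewrite /u (weight_iter m Hzd (He d)) Hdb.
have Hfw : br (hvec h d) f = (- 2) *: f by rewrite Hf evN Hdb.
have Hi : forall i, br (br e f) (iter i (br f) u) =
    (2 + 2 *+ m - 2 * i%:R) *: iter i (br f) u.
  by move=> i; rewrite Ed (weight_iter i Hu Hfw) mulNrn mulr_natr.
have ch := chain Heu Hi.
have nz : forall j, (j <= m.+1)%N -> iter j (br f) u != 0.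
  elim=> [//|j IH] Hj; apply/negP => /eqP E; have := ch j.
  rewrite E br0r => /esym /eqP; rewrite scaler_eq0 mulf_eq0 pnatr_eq0 /=.
  by rewrite (negbTE (IH (ltnW Hj))) orbF (negbTE (@lam_ne0 m j Hj)).
have Hw : rootsp br h dl (iter m.+1 (br f) u).
  apply: rootsp_eq (rootsp_iter m.+1 Hf (rootsp_iter m He Hz)).
  by rewrite mulNrn mulrSr opprD !addrA !addrK.
have := Hcen _ Hw e ce; rewrite br_anti => /eqP; rewrite oppr_eq0 ch.
rewrite scaler_eq0 mulf_eq0 pnatr_eq0 /= (negbTE (lam_ne0 (leqnn m))).
by rewrite (negbTE (nz m (leqnSn m))).
Qed.

End Basics.

Theorem proposition1p4 (R : realType) (V : lmodType R[i]) (br : V -> V -> V)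
    (B : V -> V -> R[i]) (n : nat) (h : 'I_n -> V) :
  is_lie_bracket br -> GR1 br B -> GR2 br h -> GR3 br h B ->
  (* (i) *)
  (forall alpha delta, is_root br h alpha -> isotropic_root br h B delta ->
     formR h B alpha delta = 0) /\
  (* (ii) *)
  (GR4 br h -> GR5 br h B ->
   forall delta, isotropic_root br h B delta ->
     (isolated br h B delta <->
      (forall x, rootsp br h delta x -> centralizes_core br h B x))).
Proof.
move=> HL H1 H2 H3; split.
  by move=> a dl Ha Hd; apply: (part_i HL H1 H2 H3).
move=> _ _ dl Hiso; split.
  by apply: (iso_fwd HL).
by apply: (iso_bwd HL H1 H2 H3).
Qed.
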